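(* Let $\mathcal{A}=\mathbb{C}\langle x,y,z\rangle/(x^2,y^2,z^2,xyz,yzx,zxy)$, graded by $\deg x=\deg y=\deg z=1$, and let $a_n=\dim\mathcal{A}_n$. Then $a_n=2a_{n-1}-a_{n-3}$ for all $n\ge 4$. *)

(* Defs.v *)
From HB Require Import structures.
From mathcomp Require Import all_boot all_order all_algebra all_field.
Set Implicit Arguments. Unset Strict Implicit. Unset Printing Implicit Defensive.
Import GRing.Theory Num.Theory.
Local Open Scope ring_scope.

(* Generators x, y, z of the free algebra C<x,y,z> are encoded as
   0, 1, 2 : 'I_3.  Monomials of degree n are words n.-tuple 'I_3. *)
Definition gx : 'I_3 := inord 0.
Definition gy : 'I_3 := inord 1.
Definition gz : 'I_3 := inord 2.

Definition rels : seq (seq 'I_3) :=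
  [:: [:: gx; gx]; [:: gy; gy]; [:: gz; gz];
      [:: gx; gy; gz]; [:: gy; gz; gx]; [:: gz; gx; gy]].

(* Degree-n component of the free algebra C<x,y,z>: C-valued functions on
   words of length n (coordinates w.r.t. the monomial basis). *)
Notation freeDeg n := {ffun n.-tuple 'I_3 -> algC^o}.

Definition mono n (w : n.-tuple 'I_3) : freeDeg n :=
  [ffun w' => (w' == w)%:R].

(* Degree-n component of the two-sided ideal generated by the relations:
   spanned by the products u * r * v with u, v monomials and r a relation,
   |u| + |r| + |v| = n, i.e. by the monomials w = u ++ r ++ v. *)
Definition idealDeg (n : nat) : {vspace freeDeg n} :=
  <<[seq mono w | w <- enum [pred w : n.-tuple 'I_3 | has (fun r => infix r (val w)) rels]]>>%VS.

(* a_n = dim A_n = dim (free_n / ideal_n). *)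
Definition a (n : nat) : nat := (\dim (fullv : {vspace freeDeg n}) - \dim (idealDeg n))%N.

(* Main.v *)
Require Import Defs.
From mathcomp Require Import all_boot all_order all_algebra all_field.
From mathcomp Require Import zify.
Set Implicit Arguments. Unset Strict Implicit. Unset Printing Implicit Defensive.
Import GRing.Theory.
Local Open Scope ring_scope.

Definition bad (s : seq 'I_3) : bool := has (fun r => infix r s) rels.

Definition L3 : seq 'I_3 := [:: gx; gy; gz].

Fixpoint W (n : nat) : seq (seq 'I_3) :=
  if n is m.+1 then
    [seq gx :: w | w <- W m] ++ [seq gy :: w | w <- W m] ++ [seq gz :: w | w <- W m]
  else [:: [::]].

Lemma valx : val gx = 0%N. Proof. exact: inordK. Qed.
Lemma valy : val gy = 1%N. Proof. exact: inordK. Qed.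
Lemma valz : val gz = 2%N. Proof. exact: inordK. Qed.

Definition X0 : 'I_3 := @Ordinal 3 0 isT.
Definition X1 : 'I_3 := @Ordinal 3 1 isT.
Definition X2 : 'I_3 := @Ordinal 3 2 isT.
Lemma gxE : gx = X0. Proof. by apply: val_inj; rewrite valx. Qed.
Lemma gyE : gy = X1. Proof. by apply: val_inj; rewrite valy. Qed.
Lemma gzE : gz = X2. Proof. by apply: val_inj; rewrite valz. Qed.

Lemma all3 (x : 'I_3) : [|| x == gx, x == gy | x == gz].
Proof.
rewrite -!(inj_eq val_inj) valx valy valz.
by case: x => [[|[|[|m]]] Hm].
Qed.

Lemma gxy : (gx == gy) = false. Proof. by rewrite -(inj_eq val_inj) valx valy. Qed.
Lemma gxz : (gx == gz) = false. Proof. by rewrite -(inj_eq val_inj) valx valz. Qed.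
Lemma gyz : (gy == gz) = false. Proof. by rewrite -(inj_eq val_inj) valy valz. Qed.

Lemma mem_cons_map (c x : 'I_3) w (s : seq (seq 'I_3)) :
  (x :: w \in [seq c :: v | v <- s]) = (x == c) && (w \in s).
Proof.
apply/mapP/andP => [[v Hv [-> ->]]|[/eqP -> Hw]]; first by rewrite eqxx.
by exists w.
Qed.

Lemma WS n : W n.+1 =
  [seq gx :: w | w <- W n] ++ [seq gy :: w | w <- W n] ++ [seq gz :: w | w <- W n].
Proof. by []. Qed.

Lemma mem_nil_map (c : 'I_3) (s : seq (seq 'I_3)) :
  ([::] \in [seq c :: v | v <- s]) = false.
Proof. by apply/mapP => -[]. Qed.

Lemma memW n w : (w \in W n) = (size w == n).
Proof.
elim: n w => [|n IH] w; first by case: w.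
rewrite WS !mem_cat; case: w => [|x w]; first by rewrite !mem_nil_map.
rewrite !mem_cons_map IH /= eqSS.
case: (size w == n); last by rewrite !andbF.
by rewrite !andbT all3.
Qed.

Lemma uniq_cons_map (c : 'I_3) (s : seq (seq 'I_3)) :
  uniq s -> uniq [seq c :: v | v <- s].
Proof. by move=> us; rewrite map_inj_uniq // => u v [] . Qed.

Lemma disj (c d : 'I_3) (s t : seq (seq 'I_3)) : c != d ->
  ~~ has (mem [seq c :: v | v <- s]) [seq d :: v | v <- t].
Proof.
move=> cd; apply/hasPn => _ /mapP[v _ ->] /=.
by rewrite mem_cons_map eq_sym (negbTE cd).
Qed.

Lemma uniqW n : uniq (W n).
Proof.
elim: n => [|n IH] //.
rewrite WS !cat_uniq has_cat negb_or !uniq_cons_map // !disj //; by rewrite ?gxy ?gxz ?gyz.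
Qed.

Lemma countW (P : pred (seq 'I_3)) m :
  count P (W m.+1) = (count (fun w => P (gx :: w)) (W m)
    + count (fun w => P (gy :: w)) (W m) + count (fun w => P (gz :: w)) (W m))%N.
Proof. by rewrite WS !count_cat !count_map addnA. Qed.

Lemma card_count (P : pred (seq 'I_3)) n :
  #|[pred w : n.-tuple 'I_3 | P (val w)]| = count P (W n).
Proof.
transitivity (count P (map val (enum {: n.-tuple 'I_3}))).
  rewrite count_map enumT cardE /enum_mem size_filter; apply: eq_count => w.
  by rewrite inE.
apply/permP: P; apply: uniq_perm.
- by rewrite map_inj_uniq ?enum_uniq //; apply: val_inj.
- exact: uniqW.
move=> w; rewrite memW; apply/mapP/idP => [[t _ ->]|Hw]; first by rewrite size_tuple.
by exists (Tuple Hw); rewrite ?mem_enum.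
Qed.

Lemma dim_full n : \dim (fullv : {vspace freeDeg n}) = (3 ^ n)%N.
Proof.
rewrite dimvf.
change (#|{: n.-tuple 'I_3}| * 1 = 3 ^ n)%N.
by rewrite muln1 card_tuple card_ord.
Qed.

Lemma free_mono n (S : seq (n.-tuple 'I_3)) : uniq S ->
  free [seq mono w | w <- S].
Proof.
move=> uS; apply/(@freeP _ _ _ (in_tuple [seq mono w | w <- S])) => k Hk i.
have Hi : (i < size S)%N := leq_trans (ltn_ord i) (eq_leq (size_map _ _)).
pose d := nth (nseq_tuple n (ord0 : 'I_3)) S.
have := congr1 (fun f : freeDeg n => f (d i)) Hk.
rewrite sum_ffunE ffunE (bigD1 i) //= big1 ?addr0.
  by rewrite ffunE (nth_map (nseq_tuple n ord0)) // ffunE eqxx => <-; rewrite /GRing.scale /= mulr1.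
move=> j ji; rewrite ffunE.
have Hj : (j < size S)%N := leq_trans (ltn_ord j) (eq_leq (size_map _ _)).
rewrite (nth_map (nseq_tuple n ord0)) // ffunE.
have ji' : (nat_of_ord i == nat_of_ord j) = false by rewrite eq_sym; exact: negbTE ji.
by rewrite /d nth_uniq // ji' /= mulr0n scaler0.
Qed.

Definition L (c d e : 'I_3) := has (fun r => prefix r [:: c; d; e]) rels.

Lemma badC c s : bad (c :: s) = has (fun r => prefix r (c :: s)) rels || bad s.
Proof. by rewrite /bad -has_predU; apply: eq_has => r. Qed.

Lemma pre3 c d e w : has (fun r => prefix r [:: c, d, e & w]) rels = L c d e.
Proof. by rewrite /L /rels /= !prefix0s. Qed.

Definition T n c d := count (fun w => ~~ bad [:: c, d & w]) (W n).
Definition G n := count (fun w => ~~ bad w) (W n).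

Lemma Tstep n c d e :
  count (fun w => ~~ bad [:: c, d, e & w]) (W n) = ((~~ L c d e) * T n d e)%N.
Proof.
rewrite /T; case: (boolP (L c d e)) => HL.
  rewrite mul0n; apply/eqP; rewrite -leqn0 leqNgt -has_count; apply/hasPn => w _.
  by rewrite badC pre3 HL.
rewrite mul1n; apply: eq_count => w.
by rewrite badC pre3 (negbTE HL).
Qed.

Lemma TS n c d : T n.+1 c d =
  ((~~ L c d gx) * T n d gx + (~~ L c d gy) * T n d gy + (~~ L c d gz) * T n d gz)%N.
Proof. by rewrite {1}/T countW !Tstep. Qed.

Fixpoint fib n := match n with 0 => 0%N | 1 => 1%N | (m.+1 as p).+1 => (fib p + fib m)%N end.
Lemma fibS n : fib n.+2 = (fib n.+1 + fib n)%N. Proof. by []. Qed.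
Arguments fib : simpl never.

Ltac Lc := (rewrite /L /rels ?gxE ?gyE ?gzE; vm_compute; reflexivity).

Lemma Tval n : [/\ T n gx gx = 0%N, T n gy gy = 0%N, T n gz gz = 0%N,
  [/\ T n gx gy = fib n.+1, T n gy gz = fib n.+1 & T n gz gx = fib n.+1] &
  [/\ T n gx gz = fib n.+2, T n gy gx = fib n.+2 & T n gz gy = fib n.+2]].
Proof.
elim: n => [|n [H1 H2 H3 [H4 H5 H6] [H7 H8 H9]]]; first by rewrite /T /bad /rels /W ?gxE ?gyE ?gzE; split; try split; vm_compute; reflexivity.
rewrite !TS H1 H2 H3 H4 H5 H6 H7 H8 H9.
rewrite (_ : L gx gx gx = true); last Lc.
rewrite (_ : L gx gx gy = true); last Lc.
rewrite (_ : L gx gx gz = true); last Lc.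
rewrite (_ : L gy gy gx = true); last Lc.
rewrite (_ : L gy gy gy = true); last Lc.
rewrite (_ : L gy gy gz = true); last Lc.
rewrite (_ : L gz gz gx = true); last Lc.
rewrite (_ : L gz gz gy = true); last Lc.
rewrite (_ : L gz gz gz = true); last Lc.
rewrite (_ : L gx gy gx = false); last Lc.
rewrite (_ : L gx gy gy = false); last Lc.
rewrite (_ : L gx gy gz = true); last Lc.
rewrite (_ : L gy gz gx = true); last Lc.
rewrite (_ : L gy gz gy = false); last Lc.
rewrite (_ : L gy gz gz = false); last Lc.
rewrite (_ : L gz gx gx = false); last Lc.
rewrite (_ : L gz gx gy = true); last Lc.
rewrite (_ : L gz gx gz = false); last Lc.
rewrite (_ : L gx gz gx = false); last Lc.
rewrite (_ : L gx gz gy = false); last Lc.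
rewrite (_ : L gx gz gz = false); last Lc.
rewrite (_ : L gy gx gx = false); last Lc.
rewrite (_ : L gy gx gy = false); last Lc.
rewrite (_ : L gy gx gz = false); last Lc.
rewrite (_ : L gz gy gx = false); last Lc.
rewrite (_ : L gz gy gy = false); last Lc.
rewrite (_ : L gz gy gz = false); last Lc.
rewrite /= ?fibS; split; try split; lia.
Qed.

Lemma G1 : G 1 = 3%N. Proof. rewrite /G /bad /rels /W ?gxE ?gyE ?gzE; vm_compute; reflexivity. Qed.

Lemma Gval m : G m.+1 = (3 * fib m.+2)%N.
Proof.
case: m => [|k]; first by rewrite G1.
rewrite /G countW !countW /=.
have [H1 H2 H3 [H4 H5 H6] [H7 H8 H9]] := Tval k.
rewrite /T in H1 H2 H3 H4 H5 H6 H7 H8 H9.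
rewrite H1 H2 H3 H4 H5 H6 H7 H8 H9 !fibS; lia.
Qed.

Lemma aG n : a n = G n.
Proof.
rewrite /a dim_full /idealDeg.
have E := free_mono (enum_uniq [pred w : n.-tuple 'I_3 | has (fun r => infix r (val w)) rels]).
rewrite (eqP E) size_map -cardE.
rewrite /G -card_count.
have := cardC [pred w : n.-tuple 'I_3 | bad w].
rewrite card_tuple card_ord => <-.
rewrite addKn; apply: eq_card => w.
by rewrite !inE.
Qed.

Theorem mainTheorem20 (n : nat) (hn : (4 <= n)%N) :
  (a n)%:Z = 2%:Z * (a n.-1)%:Z - (a (n - 3)%N)%:Z.
Proof.
case: n hn => [|[|[|[|k]]]] // _.
rewrite /= subSS subSS subSS subn0 !aG !Gval !fibS.
lia.
Qed.
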